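(* Let $N\in\mathbb{N}$. Let $$\mathcal{B}'(N)=\{(q_1',q_2')\in\mathbb{Z}^2 \mid q_1'+q_2' \text{ is even and } 2q_1'^2+2q_2'^2-2q_1'-q_2'=N\},$$ let $\mathcal{U}(8N+5)=\{(x,y)\in\mathbb{Z}^2\mid x^2+y^2=8N+5\}$, and let $\varphi:\mathcal{B}'(N)\to\mathcal{U}(8N+5)$ be the (well-defined) map $\varphi(q_1',q_2')=(4q_1'-2,\,4q_2'-1)$. Let the dihedral group $D_8=\langle r,s\mid r^4=s^2=(rs)^2=1\rangle$ act on $\mathcal{U}(8N+5)$ by $r(x,y)=(-y,x)$ and $s(x,y)=(y,x)$. Then: (1) the action of $D_8$ on $\mathcal{U}(8N+5)$ is free; (2) the image $\varphi(\mathcal{B}'(N))$ is a complete set of representatives of the $D_8$-orbits of $\mathcal{U}(8N+5)$.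
   Context: The set $\mathcal{B}'(N)$ is the image, under the isometry $u$ of $\mathbb{R}^2$ with matrix $\frac{1}{\sqrt2}\begin{pmatrix}1&1\\1&-1\end{pmatrix}$, of the set of elements of the lattice $M=\sqrt2\mathbb{Z}\varepsilon_1\oplus\sqrt2\mathbb{Z}\varepsilon_2$ of type $C_2^{(1)}$ with $\Lambda_0$-atomic length $N$ (equivalently, affine Grassmannian elements of type $C_2^{(1)}$, in bijection with self-conjugate $4$-cores of size $N$); the defining quadratic expression is that atomic length written in the coordinates $(q_1',q_2')$. *)

(* Defs.v *)
From Stdlib Require Import ZArith Lia.
Open Scope Z_scope.

Definition inB' (N : Z) (q : Z * Z) : Prop :=
  Z.Even (fst q + snd q) /\
  2 * fst q ^ 2 + 2 * snd q ^ 2 - 2 * fst q - snd q = N.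

Definition inU (m : Z) (u : Z * Z) : Prop := fst u ^ 2 + snd u ^ 2 = m.

Definition phi (q : Z * Z) : Z * Z := (4 * fst q - 2, 4 * snd q - 1).

Definition rot (u : Z * Z) : Z * Z := (- snd u, fst u).
Definition swp (u : Z * Z) : Z * Z := (snd u, fst u).

(* The eight elements of D_8 = <r, s | r^4 = s^2 = (rs)^2 = 1>,
   written in normal form r^k s^e with 0 <= k < 4, e in {0,1}. *)
Inductive rpow := R0 | R1 | R2 | R3.
Definition D8 := (rpow * bool)%type.
Definition D8_one : D8 := (R0, false).

Definition rpow_nat (k : rpow) : nat :=
  match k with R0 => 0 | R1 => 1 | R2 => 2 | R3 => 3 end.

Definition act (g : D8) (u : Z * Z) : Z * Z :=
  Nat.iter (rpow_nat (fst g)) rot (if snd g then swp u else u).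

Definition same_orbit (u v : Z * Z) : Prop := exists g : D8, act g u = v.

(* Main.v *)
Require Import Defs.
From Stdlib Require Import ZArith Lia.
Open Scope Z_scope.

Lemma four_cases (x : Z) : exists i, x = 4*i \/ x = 4*i+1 \/ x = 4*i+2 \/ x = 4*i+3.
Proof.
  exists (x/4). pose proof (Z.div_mod x 4). pose proof (Z.mod_pos_bound x 4). lia.
Qed.

Lemma sq_not5 (y n : Z) : y^2 <> 8*n+5.
Proof.
  destruct (four_cases y) as [j [H|[H|[H|H]]]]; subst; nia.
Qed.

Lemma free_aux (x y n : Z) : x^2 + y^2 = 8*n+5 -> x <> 0 /\ y <> 0 /\ x <> y /\ x <> -y.
Proof.
  intros H. repeat split; intro E; subst.
  - apply (sq_not5 y n). lia.
  - apply (sq_not5 x n). lia.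
  - nia.
  - nia.
Qed.

Ltac smp := unfold act, phi, inU, rot, swp, Nat.iter in *; cbn [fst snd nat_rect rpow_nat] in *.

Theorem theorem8p8 (N : nat) :
  let M := 8 * Z.of_nat N + 5 in
  (* phi is well defined: B'(N) -> U(8N+5) *)
  (forall q, inB' (Z.of_nat N) q -> inU M (phi q)) /\
  (* (1) the action of D_8 on U(8N+5) is free *)
  (forall (g : D8) (u : Z * Z), inU M u -> act g u = u -> g = D8_one) /\
  (* (2) phi(B'(N)) is a complete set of representatives of the orbits *)
  (forall u, inU M u -> exists q, inB' (Z.of_nat N) q /\ same_orbit u (phi q)) /\
  (forall q1 q2, inB' (Z.of_nat N) q1 -> inB' (Z.of_nat N) q2 ->
     same_orbit (phi q1) (phi q2) -> phi q1 = phi q2).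
Proof.
  intro M; unfold M; clear M.
  generalize (Z.of_nat N) as n; intro n.
  split; [|split; [|split]].
  - intros [a b] [_ H]. unfold inU, phi in *; smp. subst n; ring.
  - intros [[| | |] []] [x y] Hu Hg; unfold act, inU, D8_one in *; smp;
      try reflexivity; injection Hg; intros;
      destruct (free_aux x y n Hu) as (A & B & C & D); exfalso; lia.
  - intros [x y] Hu. unfold inU in Hu; smp.
    destruct (four_cases x) as [i Hx]; destruct (four_cases y) as [j Hy].
    destruct Hx as [Hx|[Hx|[Hx|Hx]]]; destruct Hy as [Hy|[Hy|[Hy|Hy]]]; subst x y;
      try (exfalso; nia).
    + (* x = 4i+1, y = 4j+2 : Y = -x, X = +-y *)
      destruct (Z.Even_or_Odd ((j+1) + (-i))) as [He|[k Hk]].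
      * exists (j+1, -i); split; [split; [exact He | smp; nia]|].
        exists (R3,false); unfold act, phi; smp; f_equal; ring.
      * exists (-j, -i); split; [split; [smp; exists (-i - k); lia | smp; nia]|].
        exists (R2,true); unfold act, phi; smp; f_equal; ring.
    + (* x = 4i+2, y = 4j+1 *)
      destruct (Z.Even_or_Odd ((i+1) + (-j))) as [He|[k Hk]].
      * exists (i+1, -j); split; [split; [exact He | smp; nia]|].
        exists (R3,true); unfold act, phi; smp; f_equal; ring.
      * exists (-i, -j); split; [split; [smp; exists (-j - k); lia | smp; nia]|].
        exists (R2,false); unfold act, phi; smp; f_equal; ring.
    + (* x = 4i+2, y = 4j+3 *)
      destruct (Z.Even_or_Odd ((i+1) + (j+1))) as [He|[k Hk]].
      * exists (i+1, j+1); split; [split; [exact He | smp; nia]|].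
        exists (R0,false); unfold act, phi; smp; f_equal; ring.
      * exists (-i, j+1); split; [split; [smp; exists (j+1 - k); lia | smp; nia]|].
        exists (R1,true); unfold act, phi; smp; f_equal; ring.
    + (* x = 4i+3, y = 4j+2 *)
      destruct (Z.Even_or_Odd ((j+1) + (i+1))) as [He|[k Hk]].
      * exists (j+1, i+1); split; [split; [exact He | smp; nia]|].
        exists (R0,true); unfold act, phi; smp; f_equal; ring.
      * exists (-j, i+1); split; [split; [smp; exists (i+1 - k); lia | smp; nia]|].
        exists (R1,false); unfold act, phi; smp; f_equal; ring.
  - intros [a1 b1] [a2 b2] [[k1 E1] H1] [[k2 E2] H2] [[[| | |] []] Hg];
      unfold act, phi in *; smp; apply pair_equal_spec in Hg; destruct Hg; f_equal; lia.
Qed.
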